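(* Let $\mathcal{D}$ be the dumbbell: the non-uniform hypergraph on two vertices $u,v$ with edge set $\{\{u,v\},\{u\},\{v\}\}$. Then for every positive integer $k$, $\mathcal{E}_{\mathcal{D}}(k)=\bigl\lfloor\tfrac{3}{2}(k-1)\bigr\rfloor$, whereas $\mathcal{E}^*_{\mathcal{D}}(k)=(\phi-o(1))k$ as $k\to\infty$, where $\phi=\frac{1+\sqrt5}{2}$ is the golden ratio.
   Context: A (non-uniform) hypergraph has edges which are nonempty subsets of its vertex set of possibly different sizes; edges of size 1 are called loops. A multi-hypergraph may additionally have repeated (parallel) edges; a simple one has no repeated edges (but may contain edges $e\subsetneq f$). A copy of $H$ in $G$ is a sub(multi)hypergraph of $G$ isomorphic to $H$ (preserving edge sizes). $\operatorname{ex}(G,H)$ is the maximum number of edges in a sub(multi)hypergraph of $G$ (a sub-multiset of its edges) containing no copy of $H$. $\mathcal{E}_H(k):=\sup\{e(G): G \text{ a simple hypergraph with } \operatorname{ex}(G,H)<k\}$ and $\mathcal{E}^*_H(k):=\sup\{e(G): G\text{ a multi-hypergraph with }\operatorname{ex}(G,H)<k\}$, where $e(G)$ counts edges with multiplicity. Hypergraphs have no isolated vertices. *)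

(* Defs.v *)
From HB Require Import structures.
From mathcomp Require Import all_boot all_order all_algebra.
From mathcomp Require Import reals.
Set Implicit Arguments. Unset Strict Implicit. Unset Printing Implicit Defensive.
Import Order.TTheory GRing.Theory Num.Theory.

(* A (multi-)hypergraph on the vertex set 'I_n is given by the multiplicity
   function of its edges: G A = number of copies of the edge A. *)
Definition mhg (n : nat) := {ffun {set 'I_n} -> nat}.

Definition is_multi_hg n (G : mhg n) : Prop := G set0 = 0%N.

Definition is_simple_hg n (G : mhg n) : Prop :=
  is_multi_hg G /\ forall A, (G A <= 1)%N.

Definition nedges n (G : {set 'I_n} -> nat) : nat := (\sum_(A : {set 'I_n}) G A)%N.

(* G contains a copy of H (H without isolated vertices): an injective vertex
   map f such that each edge f(A) occurs in G at least as often as A in H. *)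
Definition contains m n (H : mhg m) (G : {set 'I_n} -> nat) : bool :=
  [exists f : {ffun 'I_m -> 'I_n},
     injectiveb f && [forall A : {set 'I_m}, (H A <= G (f @: A))%N]].

(* Multiplicities of G'
   are bounded by nedges G, so G' ranges over a finite type. *)
Definition ex m n (G : mhg n) (H : mhg m) : nat :=
  (\max_(G' : {ffun {set 'I_n} -> 'I_(nedges G).+1} |
          [forall A, (G' A <= G A)%N] && ~~ contains H (fun A => nat_of_ord (G' A)))
      nedges (fun A => nat_of_ord (G' A)))%N.

Definition dumbbell : mhg 2 :=
  [ffun A : {set 'I_2} =>
     nat_of_bool (A \in [set [set ord0]; [set ord_max]; [set ord0; ord_max]])].

Definition golden (R : realType) : R := (1 + Num.sqrt 5) / 2.

(* Main.v *)
Require Import Defs.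
From HB Require Import structures.
From mathcomp Require Import all_boot all_order all_algebra.
From mathcomp Require Import reals.
From mathcomp Require Import zify ring lra.
Import Order.TTheory GRing.Theory Num.Theory.
Set Implicit Arguments. Unset Strict Implicit. Unset Printing Implicit Defensive.

Definition keep n (S A : {set 'I_n}) : bool :=
  if #|A| == 1%N then A \subset S else if #|A| == 2 then ~~ (A \subset S) else true.
Definition value n (G : mhg n) (S : {set 'I_n}) : nat := \sum_A G A * keep S A.

Lemma le_nedges n (G : mhg n) A : G A <= nedges G.
Proof. by rewrite /nedges (bigD1 A) //= leq_addr. Qed.

Lemma dumbbell_copy n (G : {set 'I_n} -> nat) (x y : 'I_n) :
  x != y -> 0 < G [set x] -> 0 < G [set y] -> 0 < G [set x; y] ->
  contains dumbbell G.
Proof.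
move=> xy gx gy gxy; apply/existsP.
exists [ffun i : 'I_2 => if i == ord0 then x else y].
apply/andP; split.
  apply/injectiveP => i j; rewrite !ffunE.
  case: (i =P ord0) => [->|/eqP i0]; case: (j =P ord0) => [->|/eqP j0] //.
  - by move=> e; rewrite e eqxx in xy.
  - by move=> e; rewrite e eqxx in xy.
  - move=> _; apply/val_inj; by move: i j i0 j0 => [[|[|i]] //= hi] [[|[|j]] //= hj] //=; rewrite ?ltnS ?ltn0 in hi hj.
apply/forallP => A; rewrite /dumbbell ffunE.
case HA: (A \in _) => //=; move: HA; rewrite !inE.
move=> /orP [/orP [] | ] /eqP ->.
- by rewrite imset_set1 ffunE eqxx.
- by rewrite imset_set1 ffunE.
- by rewrite imsetU1 imset_set1 !ffunE eqxx.
Qed.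

Lemma ex_ge n (G : mhg n) S : value G S <= ex G dumbbell.
Proof.
pose G' : {ffun {set 'I_n} -> 'I_(nedges G).+1} :=
  [ffun A => inord (G A * keep S A)].
have G'E A : nat_of_ord (G' A) = G A * keep S A.
  rewrite ffunE inordK // ltnS; case: (keep S A); rewrite ?muln1 ?muln0 //.
  exact: le_nedges.
have -> : value G S = nedges (fun A => nat_of_ord (G' A)).
  by apply: eq_bigr => A _; rewrite G'E.
apply: (@leq_bigmax_cond _ _ _ G'); apply/andP; split.
  by apply/forallP => A; rewrite G'E; case: (keep S A); rewrite ?muln1 ?muln0.
apply/negP => /existsP [f /andP [/injectiveP finj /forallP H]].
have H0 := H [set ord0]; have H1 := H [set ord_max]; have H2 := H [set ord0; ord_max].
rewrite !G'E /dumbbell !ffunE !inE !eqxx /= ?orbT in H0 H1 H2.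
rewrite !imset_set1 in H0 H1; rewrite imsetU1 imset_set1 in H2.
have fne : f ord0 != f ord_max by apply/eqP => /finj.
move: H0 H1 H2; rewrite /keep !cards1 cards2 fne /= subUset !sub1set.
by case: (f ord0 \in S); case: (f ord_max \in S); rewrite ?muln0 //=.
Qed.

Lemma ex_le n (G : mhg n) m : (forall S, value G S <= m) -> ex G dumbbell <= m.
Proof.
move=> hm; apply/bigmax_leqP => G' /andP [/forallP le nc].
set S := [set v | 0 < G' [set v]].
apply: leq_trans (hm S); apply: leq_sum => A _.
rewrite /keep; case: ifP => [/cards1P [v ->] | _].
  rewrite sub1set inE; case: ltnP => [_|]; first by rewrite muln1 le.
  by rewrite leqn0 => /eqP ->.
case: ifP => [/cards2P [x [y [xy ->]]] | _]; last by rewrite muln1 le.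
rewrite subUset !sub1set !inE.
case gx: (0 < G' [set x]); case gy: (0 < G' [set y]); rewrite /= ?muln1 ?le //.
case: (posnP (G' [set x; y])) => [-> // | gxy].
by case/negP: nc; apply: (dumbbell_copy xy gx gy gxy).
Qed.


Lemma sum_ind n (P : pred {set 'I_n}) c :
  (\sum_(A : {set 'I_n}) P A * c = #|[set A | P A]| * c)%N.
Proof.
rewrite -sum_nat_const [RHS]big_mkcond /=; apply: eq_bigr => A _.
by rewrite inE; case: (P A); rewrite ?mul1n ?mul0n.
Qed.

Lemma card_k n (S : {set 'I_n}) k :
  #|[set A : {set 'I_n} | (A \subset S) && (#|A| == k)]| = 'C(#|S|, k).
Proof. exact: cards_draws. Qed.

Lemma card_kT n k :
  #|[set A : {set 'I_n} | #|A| == k]| = 'C(n, k).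
Proof. by rewrite card_draws card_ord. Qed.

Lemma bin2E m : (2 * 'C(m, 2) = m * (m - 1))%N.
Proof. by rewrite (mul_bin_left m 1) bin1 mulnC. Qed.

Lemma key_ineq l s : (2 * (l * s) + s <= s * s + l.+1 * l)%N.
Proof.
case: (leqP s l) => h.
  have -> : l = (s + (l - s))%N by lia.
  set d := (l - s)%N.
  have -> : (s * s + (s + d).+1 * (s + d) = (2 * ((s + d) * s) + s) + (d * d + d))%N by ring.
  exact: leq_addr.
have -> : s = (l + 1 + (s - l - 1))%N by lia.
set d := (s - l - 1)%N.
have -> : ((l + 1 + d) * (l + 1 + d) + l.+1 * l = (2 * (l * (l + 1 + d)) + (l + 1 + d)) + (d * d + d))%N by ring.
exact: leq_addr.
Qed.

Definition Kc n (l t : nat) : mhg n :=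
  [ffun A : {set 'I_n} => t * (if #|A| == 1%N then l else if #|A| == 2 then 1 else 0)]%N.

Lemma Kc_multi n l t : is_multi_hg (Kc n l t).
Proof. by rewrite /is_multi_hg ffunE cards0 muln0. Qed.

Lemma Kc_nedges n l t : nedges (Kc n l t) = (t * (l * n + 'C(n, 2)))%N.
Proof.
rewrite /nedges (eq_bigr (fun A : {set 'I_n} => t * ((#|A| == 1%N) * l + (#|A| == 2) * 1))%N); last first.
  move=> A _; rewrite ffunE; case: eqP => [->|_] //=; first by rewrite mul1n muln1 addn0.
  by case: (#|A| == 2).
rewrite -big_distrr /= big_split /= !sum_ind !card_kT bin1 mulnC muln1.
by rewrite mulnC (mulnC n).
Qed.

Lemma Kc_value n l t S :
  (value (Kc n l t) S <= t * ('C(n, 2) + 'C(l.+1, 2)))%N.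
Proof.
rewrite /value (eq_bigr (fun A : {set 'I_n} => t * (((A \subset S) && (#|A| == 1%N)) * l +
           ((~~ (A \subset S)) && (#|A| == 2)) * 1))%N); last first.
  move=> A _; rewrite ffunE /keep; have [->|h1] := eqVneq #|A| 1%N.
    by case: (A \subset S); rewrite /= ?muln1 ?muln0 ?mul1n ?mul0n ?addn0.
  rewrite andbF; have [_|h2] := eqVneq #|A| 2%N.
    by case: (A \subset S); rewrite /= ?muln1 ?muln0 ?mul1n ?mul0n ?addn0.
  by rewrite andbF /= !muln0.
rewrite -big_distrr /= big_split /= !sum_ind card_k bin1 !muln1.
have split2 : (#|[set A : {set 'I_n} | (~~ (A \subset S)) && (#|A| == 2)]| +
              #|[set A : {set 'I_n} | (A \subset S) && (#|A| == 2)]| = 'C(n, 2))%N.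
  rewrite -card_kT -(muln1 #|[set A : {set 'I_n} | #|A| == 2]|) -sum_ind.
  rewrite -[X in (X + _)%N]muln1 -sum_ind -[X in (_ + X)%N]muln1 -sum_ind -big_split /=.
  by apply: eq_bigr => A _; case: (A \subset S); case: (#|A| == 2).
rewrite card_k in split2.
apply: leq_mul => //.
move: split2; set c2 := #|[set A | _ & _]|; set s := #|S| => split2.
have h1 := bin2E s; have h2 := bin2E l.+1; have k := key_ineq l s.
have h3 : (s * (s - 1) + s = s * s)%N.
  by case: (s) => [|m] //; rewrite subn1 /=; ring.
rewrite subn1 /= in h2.
move: h1 h2 h3 k; rewrite (mulnC s l).
set P := (l * s)%N; set Q := (s * s)%N; set X := (l.+1 * l)%N; set Y := (s * (s - 1))%N.
set C := 'C(s, 2); set D := 'C(l.+1, 2).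
lia.
Qed.

Definition lv n (G : mhg n) (X : {set 'I_n}) : nat := \sum_(v in X) G [set v].
Definition ee n (G : mhg n) (X : {set 'I_n}) : nat :=
  \sum_(A : {set 'I_n} | (#|A| == 2) && (A \subset X)) G A.
Definition dv n (G : mhg n) (v : 'I_n) (X : {set 'I_n}) : nat :=
  \sum_(A : {set 'I_n} | [&& #|A| == 2, A \subset X & v \in A]) G A.

Lemma sum_le_pred (T : finType) (P Q : pred T) (F : T -> nat) :
  (forall x, P x -> Q x) -> (\sum_(x | P x) F x <= \sum_(x | Q x) F x)%N.
Proof.
move=> PQ; rewrite [X in (X <= _)%N]big_mkcond [X in (_ <= X)%N]big_mkcond.
apply: leq_sum => x _; case Px: (P x); last by [].
by rewrite PQ.
Qed.

Lemma ee_split n (G : mhg n) v (X : {set 'I_n}) : ee G X = (ee G (X :\ v) + dv G v X)%N.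
Proof.
rewrite /ee (bigID (fun A : {set 'I_n} => v \in A)) /= addnC; congr (_ + _)%N.
  apply: eq_bigl => A; rewrite -andbA; congr (_ && _).
  apply/idP/idP => [/andP [sAX nvA] | sAXv].
    by apply/subsetP => w wA; rewrite !inE (subsetP sAX) // andbT; apply: contraNneq nvA => <-.
  have sAX : A \subset X by apply: subset_trans sAXv (subD1set _ _).
  rewrite sAX /=; apply/negP => vA; have := subsetP sAXv v vA; by rewrite !inE eqxx.
by apply: eq_bigl => A; rewrite andbA.
Qed.

Lemma ee_mono n (G : mhg n) (X Y : {set 'I_n}) : X \subset Y -> (ee G X <= ee G Y)%N.
Proof.
move=> XY; apply: sum_le_pred => A /andP [-> AX] /=; exact: subset_trans AX XY.
Qed.

Lemma dv_mono n (G : mhg n) v (X Y : {set 'I_n}) : X \subset Y -> (dv G v X <= dv G v Y)%N.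
Proof.
move=> XY; apply: sum_le_pred => A /and3P [-> AX ->]; by rewrite (subset_trans AX XY).
Qed.

Lemma lv_split n (G : mhg n) v (X : {set 'I_n}) : v \in X -> lv G X = (G [set v] + lv G (X :\ v))%N.
Proof. by move=> vX; rewrite /lv (big_setD1 v vX). Qed.

Lemma lv_diff n (G : mhg n) (X A : {set 'I_n}) : (forall w, G [set w] <= 1)%N ->
  (lv G X <= lv G (X :\: A) + #|A|)%N.
Proof.
move=> G1; apply: (@leq_trans (lv G (X :\: A) + lv G A)%N).
  rewrite /lv [X in (X <= _)%N]big_mkcond [X in (_ <= _ + X)%N]big_mkcond.
  rewrite [X in (_ <= X + _)%N]big_mkcond -big_split /=; apply: leq_sum => w _.
  rewrite !inE; case: (w \in X); case: (w \in A) => //=; exact: leq_addr.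
rewrite leq_add2l -sum1_card; apply: leq_sum => w _; exact: G1.
Qed.

Lemma ee0 n (G : mhg n) : ee G set0 = 0%N.
Proof.
rewrite /ee big1 // => A /andP [A2]; rewrite subset0 => /eqP A0.
by rewrite A0 cards0 in A2.
Qed.

Lemma claim n (G : mhg n) : (forall w, G [set w] <= 1)%N ->
  forall m (T : {set 'I_n}), (#|T| <= m)%N ->
  exists S : {set 'I_n}, S \subset T /\ (2 * lv G T + 3 * ee G S <= 3 * lv G S + ee G T)%N.
Proof.
move=> G1; elim=> [|m IH] T.
  rewrite leqn0 cards_eq0 => /eqP ->; exists set0; split => //.
  by rewrite /lv !big_set0 ee0.
move=> hT.
have [T0|[v vT]] := set_0Vmem T.
  by exists set0; rewrite T0 /lv !big_set0 ee0; split.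
have hTv : (#|T :\ v| <= m)%N by move: hT; rewrite (cardsD1 v T) vT.
have [hA|hB] := leqP (2 * G [set v]) (dv G v T).
  have [S [ST H]] := IH _ hTv; exists S; split.
    exact: subset_trans ST (subD1set _ _).
  rewrite (lv_split G vT) (ee_split G v T); lia.
have Gv1 : G [set v] = 1%N by have := G1 v; lia.
have dv1 : (dv G v T <= 1)%N by lia.
have [d0|d1] : dv G v T = 0%N \/ dv G v T = 1%N by lia.
  have [S' [ST H]] := IH _ hTv.
  have vS' : v \notin S' by apply/negP => /(subsetP ST); rewrite !inE eqxx.
  exists (v |: S'); split.
    by rewrite subUset sub1set vT (subset_trans ST (subD1set _ _)).
  have vS : v \in v |: S' by rewrite !inE eqxx.
  have eS : ee G (v |: S') = ee G S'.
    rewrite (ee_split G v (v |: S')) setU1K //.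
    have : (dv G v (v |: S') <= dv G v T)%N.
      by apply: dv_mono; rewrite subUset sub1set vT (subset_trans ST (subD1set _ _)).
    lia.
  rewrite eS (lv_split G vS) setU1K // (lv_split G vT) (ee_split G v T); lia.
have [A /andP [/and3P [A2 AT vA] GA]] : exists A : {set 'I_n}, [&& #|A| == 2, A \subset T & v \in A] && (0 < G A)%N.
  apply/existsP; apply: contraTT isT => /existsPn H.
  have : dv G v T = 0%N.
    by rewrite /dv big1 // => A PA; have := H A; rewrite PA /= lt0n negbK => /eqP.
  by rewrite d1.
have hTA : (#|T :\: A| <= m)%N.
  have : (#|T :\: A| <= #|T :\ v|)%N.
    by apply: subset_leq_card; apply: setDS; rewrite sub1set.
  lia.
have [S' [ST H]] := IH _ hTA.
have vS' : v \notin S' by apply/negP => /(subsetP ST); rewrite !inE vA.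
have ST' : v |: S' \subset T by rewrite subUset sub1set vT (subset_trans ST (subsetDl _ _)).
exists (v |: S'); split => //.
have vS : v \in v |: S' by rewrite !inE eqxx.
have nAS : ~~ (A \subset v |: S').
  apply/negP => AS.
  have : (0 < #|A :\ v|)%N by have := cardsD1 v A; rewrite vA; move: A2 => /eqP; lia.
  rewrite card_gt0 => /set0Pn [w]; rewrite !inE => /andP [wv wA].
  have := subsetP AS w wA; rewrite !inE (negbTE wv) /= => /(subsetP ST).
  by rewrite !inE wA.
have eS : ee G (v |: S') = ee G S'.
  rewrite (ee_split G v (v |: S')) setU1K //.
  suff : (dv G v (v |: S') + G A <= dv G v T)%N by lia.
  rewrite /dv [X in (_ <= X)%N](bigD1 A) /=; last by rewrite A2 AT vA.
  rewrite addnC leq_add2l; apply: sum_le_pred => B /and3P [-> BS ->].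
  rewrite (subset_trans BS ST') /=; apply: contraNneq nAS => <-; exact: BS.
have eT : (ee G (T :\: A) + 1 <= ee G T)%N.
  rewrite (ee_split G v T) d1 leq_add2r; apply: ee_mono.
  by apply: setDS; rewrite sub1set.
have lT := lv_diff T A G1.
move: A2 => /eqP A2; rewrite A2 in lT.
rewrite eS (lv_split G vS) setU1K // Gv1; lia.
Qed.

Lemma l_vertex n (G : mhg n) (X : {set 'I_n}) :
  \sum_(A : {set 'I_n} | (#|A| == 1%N) && (A \subset X)) G A = lv G X.
Proof.
rewrite /lv -(big_imset (fun A => G A) (in2W (@set1_inj _))) /=.
apply: eq_bigl => A; apply/andP/imsetP => [[/cards1P [v ->]] | [v vX ->]].
  by rewrite sub1set => vX; exists v.
by rewrite cards1 sub1set.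
Qed.

Lemma decomp n (G : mhg n) (S : {set 'I_n}) :
  (value G S + ee G S =
   \sum_(A : {set 'I_n} | (#|A| == 1%N) && (A \subset S)) G A + ee G setT +
   \sum_(A : {set 'I_n} | (#|A| != 1%N) && (#|A| != 2)) G A)%N /\
  (nedges G =
   \sum_(A : {set 'I_n} | (#|A| == 1%N) && (A \subset setT)) G A + ee G setT +
   \sum_(A : {set 'I_n} | (#|A| != 1%N) && (#|A| != 2)) G A)%N.
Proof.
rewrite /value /nedges /ee !(big_mkcond (fun A : {set 'I_n} => _ && _)) /=.
rewrite -!big_split /=; split; apply: eq_bigr => A _; rewrite /keep ?subsetT;
  case E1: (#|A| == 1%N); case E2: (#|A| == 2); rewrite /=;
  try (by rewrite (eqP E1) in E2);
  by case: (A \subset S); rewrite /= ?muln1 ?muln0 ?addn0 ?add0n.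
Qed.

Lemma simple_bound n (G : mhg n) : (forall w, G [set w] <= 1)%N ->
  exists S, (2 * nedges G <= 3 * value G S)%N.
Proof.
move=> G1; have [S [_ H]] := claim G1 (leqnn #|[set: 'I_n]|).
exists S; have [d1 d2] := decomp G S.
rewrite !l_vertex in d1 d2.
have eS : (ee G S <= ee G setT)%N by apply: ee_mono; apply: subsetT.
lia.
Qed.

Lemma lo_proof N (i : 'I_(N %/ 2)) : (2 * i < N)%N.
Proof. have := ltn_ord i; lia. Qed.
Lemma hi_proof N (i : 'I_(N %/ 2)) : (2 * i + 1 < N)%N.
Proof. have := ltn_ord i; lia. Qed.
Definition plo N (i : 'I_(N %/ 2)) : 'I_N := Ordinal (lo_proof i).
Definition phi N (i : 'I_(N %/ 2)) : 'I_N := Ordinal (hi_proof i).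
Definition Pair N (i : 'I_(N %/ 2)) : {set 'I_N} := [set plo i; phi i].

Lemma mem_Pair N (i : 'I_(N %/ 2)) (v : 'I_N) : v \in Pair i -> (v %/ 2)%N = i.
Proof. rewrite !inE => /orP [] /eqP -> /=.
all: lia. Qed.

Lemma Pair_inj N : injective (@Pair N).
Proof.
move=> i j e; have : plo i \in Pair j by rewrite -e !inE eqxx.
move/mem_Pair => /= h; apply: val_inj => /=; lia.
Qed.

Lemma card_Pair N (i : 'I_(N %/ 2)) : #|Pair i| = 2.
Proof.
rewrite cards2; case: eqP => // e; have := congr1 val e => /=; lia.
Qed.

Definition Gs N : mhg N :=
  [ffun A : {set 'I_N} => nat_of_bool ((#|A| == 1%N) || (A \in [set Pair i | i : 'I_(N %/ 2)]))].

Lemma sum_bool (T : finType) (P : pred T) : (\sum_(i : T) (P i : nat) = #|P|)%N.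
Proof.
rewrite -sum1_card [RHS]big_mkcond; apply: eq_bigr => i _; rewrite unfold_in; by case: (P i).
Qed.

Lemma Gs_split N (A : {set 'I_N}) :
  Gs N A = ((#|A| == 1%N) + (A \in [set Pair i | i : 'I_(N %/ 2)]))%N.
Proof.
rewrite ffunE; case E1: (#|A| == 1%N) => /=; last by case: (A \in _).
suff -> : (A \in [set Pair i | i : 'I_(N %/ 2)]) = false by [].
by apply/negP => /imsetP [i _ eA]; rewrite eA card_Pair in E1.
Qed.

Lemma Gs_simple N : is_simple_hg (Gs N).
Proof.
split; last by move=> A; rewrite ffunE; case: (_ || _).
rewrite /is_multi_hg Gs_split cards0 /=; case: imsetP => // [[i _ e]].
by have := card_Pair i; rewrite -e cards0.
Qed.

Lemma Gs_nedges N : nedges (Gs N) = (N + N %/ 2)%N.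
Proof.
rewrite /nedges (eq_bigr _ (fun A _ => Gs_split A)) big_split /=.
rewrite (sum_bool (fun A : {set 'I_N} => #|A| == 1%N)) (sum_bool (mem [set Pair i | i : 'I_(N %/ 2)])).
rewrite card_imset; last exact: Pair_inj.
rewrite card_ord; congr (_ + _)%N.
rewrite -[RHS](bin1 N) -card_kT; apply: eq_card => A; by rewrite inE.
Qed.

Lemma Pair_le1 N (v : 'I_N) : (\sum_(i : 'I_(N %/ 2)) (v \in Pair i : nat) <= 1)%N.
Proof.
rewrite (sum_bool (fun i : 'I_(N %/ 2) => v \in Pair i)).
apply/card_le1_eqP => i j; rewrite !unfold_in => /mem_Pair hi /mem_Pair hj.
by apply: val_inj => /=; lia.
Qed.

Lemma Gs_value N S : (value (Gs N) S <= N)%N.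
Proof.
rewrite /value (eq_bigr (fun A : {set 'I_N} => ((A \subset S) && (#|A| == 1%N)) * 1 +
      (A \in [set Pair i | i : 'I_(N %/ 2)]) * keep S A)%N); last first.
  move=> A _; rewrite Gs_split mulnDl; congr (_ + _)%N.
  by case E: (#|A| == 1%N); rewrite /keep E /= ?andbT ?andbF ?muln1 ?mul0n ?mul1n.
rewrite big_split /= sum_ind cards_draws bin1 muln1.
rewrite (eq_bigr (fun A => if A \in [set Pair i | i : 'I_(N %/ 2)] then (keep S A : nat) else 0%N));
  last by move=> A _; case: (_ \in _); rewrite ?mul1n ?mul0n.
rewrite -big_mkcond big_imset /=; last by move=> i j _ _; apply: Pair_inj.
apply: (@leq_trans (#|S| + #|~: S|)%N); last by rewrite cardsC card_ord.
rewrite leq_add2l.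
apply: (@leq_trans (\sum_(i : 'I_(N %/ 2)) \sum_(v in ~: S) (v \in Pair i : nat))%N).
  apply: leq_sum => i _; rewrite /keep card_Pair /=.
  case: (boolP (Pair i \subset S)) => // /subsetPn [v vP vS].
  by rewrite (bigD1 v) /= ?vP ?inE //.
rewrite exchange_big /= -sum1_card; apply: leq_sum => v _; exact: Pair_le1.
Qed.

Local Open Scope ring_scope.

Definition wt (R : realType) (n : nat) (p : R) (S : {set 'I_n}) : R := \prod_(i : 'I_n) (if i \in S then p else 1 - p).

Lemma wt_sub (R : realType) (n : nat) (p : R) (A : {set 'I_n}) :
  \sum_(S : {set 'I_n}) wt p S * (A \subset S)%:R = p ^+ #|A|.
Proof.
pose F (i : 'I_n) (b : bool) : R := (if b then p else 1 - p) * (if i \in A then b%:R else 1).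
have -> : \sum_(S : {set 'I_n}) wt p S * (A \subset S)%:R =
          \sum_(f : {ffun 'I_n -> bool}) \prod_i F i (f i).
  rewrite (reindex (fun f : {ffun 'I_n -> bool} => [set i | f i])) /=; last first.
    exists (fun S : {set 'I_n} => [ffun i => i \in S]) => [f _ | S _].
      by apply/ffunP => i; rewrite ffunE inE.
    by apply/setP => i; rewrite inE ffunE.
  apply: eq_bigr => f _; rewrite /F big_split /=; congr (_ * _).
    by apply: eq_bigr => i _; rewrite inE.
  case: (boolP (A \subset _)) => [/subsetP sA | /subsetPn [i iA niS]].
    rewrite big1 // => i _; case: ifP => // /sA; rewrite inE => ->; by [].
  apply/esym/eqP/prodf_eq0; exists i => //.
  by rewrite iA; move: niS; rewrite inE => /negbTE ->.
rewrite -bigA_distr_bigA /= (_ : p ^+ #|A| = \prod_(i in A) p); last by rewrite prodr_const.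
rewrite [RHS]big_mkcond /=.
apply: eq_bigr => i _; rewrite big_bool /F /=.
case: (i \in A); rewrite ?mulr1 ?mulr0 ?addr0 //.
by rewrite addrC subrK.
Qed.

Lemma wt_ge0 (R : realType) (n : nat) (p : R) (S : {set 'I_n}) : 0 <= p <= 1 -> 0 <= wt p S.
Proof.
move=> /andP [p0 p1]; apply: prodr_ge0 => i _; case: ifP => // _.
by rewrite subr_ge0.
Qed.

Lemma wt_sum (R : realType) (n : nat) (p : R) : \sum_(S : {set 'I_n}) wt p S = 1.
Proof.
rewrite -(expr0 p) -(cards0 'I_n) -wt_sub; apply: eq_bigr => S _.
by rewrite sub0set mulr1.
Qed.

Lemma avg (R : realType) (n : nat) (G : mhg n) (x : R) : 0 <= x <= 1 -> x ^+ 2 + x = 1 ->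
  x * (nedges G)%:R <= (ex G dumbbell)%:R.
Proof.
move=> x01 xx.
have E A : x <= \sum_(S : {set 'I_n}) wt x S * (keep S A)%:R.
have [c1|c1] := eqVneq #|A| 1%N.
    rewrite (eq_bigr (fun S => wt x S * (A \subset S)%:R)); last first.
      by move=> S _; rewrite /keep c1 eqxx.
    by rewrite wt_sub c1 expr1.
  have [c2|c2] := eqVneq #|A| 2%N.
    rewrite (eq_bigr (fun S => wt x S - wt x S * (A \subset S)%:R)); last first.
      move=> S _; rewrite /keep (negbTE c1) c2 eqxx.
      by case: (A \subset S); rewrite /= ?mulr1 ?mulr0 ?subr0 ?subrr.
    rewrite sumrB wt_sum wt_sub c2; lra.
  rewrite (eq_bigr (fun S => wt x S)) ?wt_sum; first by case/andP: x01.
  by move=> S _; rewrite /keep (negbTE c1) (negbTE c2) mulr1.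
apply: (@le_trans _ _ (\sum_(S : {set 'I_n}) wt x S * (ex G dumbbell)%:R)); last first.
  by rewrite -mulr_suml wt_sum mul1r.
apply: (@le_trans _ _ (\sum_(S : {set 'I_n}) wt x S * (value G S)%:R)); last first.
  apply: ler_sum => S _; apply: ler_wpM2l; first exact: wt_ge0.
  by rewrite ler_nat; apply: ex_ge.
rewrite /nedges natr_sum mulr_sumr.
rewrite [X in _ <= X](eq_bigr (fun S => \sum_A wt x S * ((G A)%:R * (keep S A)%:R))); last first.
  by move=> S _; rewrite /value natr_sum mulr_sumr; apply: eq_bigr => A _; rewrite natrM.
rewrite exchange_big /=; apply: ler_sum => A _.
rewrite mulrC; apply: (@le_trans _ _ ((G A)%:R * \sum_(S : {set 'I_n}) wt x S * (keep S A)%:R)).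
  by apply: ler_wpM2l => //; apply: E.
rewrite mulr_sumr le_eqVlt; apply/orP; left; apply/eqP/eq_bigr => S _; by rewrite mulrCA.
Qed.


Lemma base_real (R : realType) (x e N L : R) : x ^+ 2 + x = 1 -> 0 < x -> x < 1 ->
  0 < e -> 2 <= N -> 4 <= e * (N - 1) -> 0 <= L -> L <= x * N -> x * N < L + 1 ->
  (1 + x - e / 2) * (N * (N - 1) + L * (L + 1)) <= 2 * L * N + N * (N - 1).
Proof.
move=> xx x0 x1 e0 N2 eN L0 LxN xNL.
set d := x * N - L.
have id : (1 + x) * (N * (N - 1) + L * (L + 1)) - (2 * L * N + N * (N - 1)) =
   (1 + x) * d ^+ 2 + (1 + x) * L - x * N + (x ^+ 2 + x - 1) * (2 * N * L - x * N ^+ 2).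
  rewrite /d; ring.
rewrite xx subrr mul0r addr0 in id.
have d0 : 0 <= d by rewrite /d; lra.
have d1 : d < 1 by rewrite /d; lra.
have dd : (1 + x) * d ^+ 2 <= 2 by nra.
have LL : (1 + x) * L <= N.
  have : (1 + x) * L <= (1 + x) * (x * N) by nra.
  have -> : (1 + x) * (x * N) = (x ^+ 2 + x) * N by ring.
  by rewrite xx mul1r.
have xN : 0 <= x * N by nra.
have eE : 2 * N <= e / 2 * (N * (N - 1) + L * (L + 1)).
  have : 0 <= L * (L + 1) by nra.
  nra.
nra.
Qed.


Lemma golden_facts (R : realType) :
  let x := golden R - 1 in [/\ x ^+ 2 + x = 1, 0 < x & x < 1].
Proof.
rewrite /golden; set s := Num.sqrt 5.
have s5 : s ^+ 2 = 5 by rewrite sqr_sqrtr.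
have s0 : 0 <= s by apply: sqrtr_ge0.
have s1 : 1 < s by nra.
have s3 : s < 3 by nra.
split.
- have -> : ((1 + s) / 2 - 1) ^+ 2 + ((1 + s) / 2 - 1) = (s ^+ 2 - 1) / 4 by field.
  by rewrite s5; field.
- lra.
- lra.
Qed.

Theorem theorem1p5 :
  (* E_D(k) = floor(3(k-1)/2): the supremum is an upper bound and is attained *)
  (forall k : nat, (0 < k)%N ->
     (forall n (G : mhg n), is_simple_hg G -> (ex G dumbbell < k)%N ->
        (nedges G <= (3 * (k - 1)) %/ 2)%N) /\
     (exists n (G : mhg n), is_simple_hg G /\ (ex G dumbbell < k)%N /\
        nedges G = ((3 * (k - 1)) %/ 2)%N)) /\
  (* E*_D(k) = (phi - o(1)) k, i.e. E*_D(k)/k -> phi *)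
  (forall (R : realType) (eps : R), 0 < eps ->
     exists K : nat, forall k : nat, (K <= k)%N ->
       (forall n (G : mhg n), is_multi_hg G -> (ex G dumbbell < k)%N ->
          (nedges G)%:R <= (golden R + eps) * k%:R) /\
       (exists n (G : mhg n), is_multi_hg G /\ (ex G dumbbell < k)%N /\
          (golden R - eps) * k%:R <= (nedges G)%:R)).
Proof.
split.
  move=> k k0; split.
    move=> n G [Gm G1] hk.
    have [S h] := simple_bound (fun w => G1 [set w]).
    have := ex_ge G S; lia.
  exists (k - 1)%N, (Gs (k - 1)); split; first exact: Gs_simple.
  split; last by rewrite Gs_nedges; lia.
  have := @ex_le _ (Gs (k - 1)) (k - 1) (@Gs_value (k - 1)); lia.
move=> R eps eps0.
have [xx x0 x1] := golden_facts R.
set x := golden R - 1 in xx x0 x1.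
have gx : golden R = 1 + x by rewrite /x; ring.
have x01 : 0 <= x <= 1 by apply/andP; split; lra.
pose n0 := (Num.truncn (4 / eps) + 2)%N.
pose l := Num.truncn (x * n0%:R).
pose eB := ('C(n0, 2) + 'C(l.+1, 2))%N.
pose mB := (l * n0 + 'C(n0, 2))%N.
have n02 : (2 <= n0)%N by rewrite /n0; lia.
have eB0 : (0 < eB)%N by rewrite /eB ltn_addr // bin_gt0.
have hn : 4 <= eps * (n0%:R - 1).
  have h := truncnS_gt (4 / eps).
  have -> : n0%:R - 1 = (Num.truncn (4 / eps)).+1%:R :> R.
    by rewrite /n0 natrD -natr1; ring.
  have : 4 / eps * eps = 4 by rewrite divfK // lt0r_neq0.
  nra.
have hl1 : l%:R <= x * n0%:R by rewrite /l truncn_le; nra.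
have hl2 : x * n0%:R < l%:R + 1 by have := truncnS_gt (x * n0%:R); rewrite -natr1.
have N2 : 2 <= n0%:R :> R by rewrite (ler_nat R 2 n0).
have hb := base_real xx x0 x1 eps0 N2 hn (ler0n _ l) hl1 hl2.
have e2 : (2 * eB = n0 * (n0 - 1) + l.+1 * l)%N.
  rewrite /eB mulnDr bin2E (bin2E l.+1); lia.
have m2 : (2 * mB = 2 * l * n0 + n0 * (n0 - 1))%N by rewrite /mB mulnDr bin2E mulnA.
have E2 : 2 * eB%:R = n0%:R * (n0%:R - 1) + l%:R * (l%:R + 1) :> R.
  have h : (2 * eB)%:R = (n0 * (n0 - 1) + l.+1 * l)%:R :> R by rewrite e2.
  rewrite natrM natrD !natrM natrB ?(leq_trans _ n02) // -natr1 in h.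
  rewrite h; ring.
have M2 : 2 * mB%:R = 2 * l%:R * n0%:R + n0%:R * (n0%:R - 1) :> R.
  have h : (2 * mB)%:R = (2 * l * n0 + n0 * (n0 - 1))%:R :> R by rewrite m2.
  by rewrite natrM natrD !natrM natrB ?(leq_trans _ n02) // in h.
have hbE : (1 + x - eps / 2) * eB%:R <= mB%:R by rewrite -E2 -M2 in hb; lra.
pose K := (Num.truncn (4 * eB%:R / eps)).+1.
exists K => k hk; split.
  move=> n G Gm hk'.
  have hav := avg G x01 xx.
  have hex : (ex G dumbbell)%:R <= k%:R :> R by rewrite ler_nat ltnW.
  have N0 : 0 <= (nedges G)%:R :> R by [].
  have -> : (nedges G)%:R = (x ^+ 2 + x) * (nedges G)%:R :> R by rewrite xx mul1r.
  rewrite gx.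
  have h1 : (1 + x) * (x * (nedges G)%:R) <= (1 + x) * (ex G dumbbell)%:R.
    by apply: ler_wpM2l => //; lra.
  have h2 : (1 + x) * (ex G dumbbell)%:R <= (1 + x) * k%:R.
    by apply: ler_wpM2l => //; lra.
  have h3 : 0 <= eps * k%:R by apply: mulr_ge0 => //; lra.
  have -> : (x ^+ 2 + x) * (nedges G)%:R = (1 + x) * (x * (nedges G)%:R) by ring.
  lra.
pose t := ((k - 1) %/ eB)%N.
have hK : (1 <= k)%N by apply: leq_trans hk.
have htd : (t * eB <= k - 1)%N by apply: leq_trunc_div.
have hkt : (k <= t * eB + eB)%N.
  have := divn_eq (k - 1) eB; have := ltn_pmod (k - 1) eB0; rewrite -/t; lia.
exists n0, (Kc n0 l t); split; first exact: Kc_multi.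
split.
  have := @ex_le _ (Kc n0 l t) (t * eB) (@Kc_value n0 l t); rewrite -/eB; lia.
rewrite Kc_nedges -/mB natrM gx.
have hkR : k%:R <= t%:R * eB%:R + eB%:R :> R by rewrite -natrM -natrD ler_nat.
have hkK : 4 * eB%:R < eps * k%:R.
  have h := truncnS_gt (4 * eB%:R / eps).
  have : (K%:R <= k%:R :> R) by rewrite ler_nat.
  have : 4 * eB%:R / eps * eps = 4 * eB%:R by rewrite divfK // lt0r_neq0.
  rewrite /K; nra.
have E0 : 0 <= eB%:R :> R by [].
have T0 : 0 <= t%:R :> R by [].
have [hneg|hpos] := lerP (1 + x - eps) 0.
  have : 0 <= t%:R * mB%:R :> R by apply: mulr_ge0.
  have : 0 <= k%:R :> R by [].
  nra.
have h1 : t%:R * ((1 + x - eps / 2) * eB%:R) <= t%:R * mB%:R by apply: ler_wpM2l.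
have h2 : (1 + x - eps / 2) * (k%:R - eB%:R) <= (1 + x - eps / 2) * (t%:R * eB%:R).
  by apply: ler_wpM2l; lra.
have h3 : (1 + x - eps / 2) * eB%:R <= 2 * eB%:R by apply: ler_wpM2r; lra.
have e1 : t%:R * ((1 + x - eps / 2) * eB%:R) = (1 + x - eps / 2) * (t%:R * eB%:R) :> R by ring.
rewrite e1 in h1.
nra.
Qed.
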